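(* Let $\mathbf m^*=(\mathbf x^*,\mathbf p^* )$ be an efficient stationary profile of the mechanism (with constants $\kappa^*>0$, $\gamma>0$, $w^*_{j,l}$). Then every agent weakly prefers its outcome to the initial allocation $(\mathbf 0,0)$: for every $i\in\mathcal A$, $U_i(\mathbf x_i^* )-t_i(\mathbf m^* )\ge U_i(\mathbf 0)-0=0$.
   Context: Agents $\mathcal A=\{1,\dots,m\}$; finite set of divisible goods $\mathcal L$ with capacities $c_l\ge 0$. Each agent $i$ has a fixed subset $\mathcal L_i\subseteq\mathcal L$ of goods it may request; $\mathcal A_l=\{i:l\in\mathcal L_i\}$, assumed to satisfy $|\mathcal A_l|\ge 3$. Each utility $U_i:\mathbb R^{|\mathcal L_i|}\to\mathbb R$ is differentiable and concave with $U_i(\mathbf 0)=0$. A message of agent $i$ is $\mathbf m_i=(\mathbf x_i,\mathbf p_i)$ with $0\le x_{i,l}\le c_l$ and $0\le p_{i,l}\le M$, $l\in\mathcal L_i$, for a fixed $0<M<\infty$. For a good $l$ write $N=|\mathcal A_l|$, $\bar p_l=\frac1N\sum_{j\in\mathcal A_l}p_{j,l}$, $p_{-i,l}=\frac1{N-1}\sum_{j\in\mathcal A_l,j\ne i}p_{j,l}$, $w_{-i,l}=\frac1{N-1}\sum_{j\in\mathcal A_l,j\ne i}w_{j,l}$, $\mathcal E_{-i,l}=\sum_{j\in\mathcal A_l,j\neq i}x_{j,l}-c_l$. Tax of agent $i$ for good $l$ (given $\kappa>0$, $\gamma>0$, numbers $w_{j,l}\ge0$): $t_{i,l}=w_{-i,l}x_{i,l}+\frac1\kappa|p_{i,l}-\bar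 p_l|^2-w_{-i,l}(p_{i,l}-p_{-i,l})\frac{x_{i,l}+\mathcal E_{-i,l}}{\gamma}+\phi_{i,l}$, with $\bar p_l$ computed including agent $i$'s own $p_{i,l}$ and $\phi_{i,l}$ depending only on the messages of agents other than $i$; at the profile $\mathbf m^*$ considered, $\phi_{i,l}=-w^*_l\,\frac{1}{N-1}\sum_{j\in\mathcal A_l,j\ne i}x^*_{j,l}$. Total tax $t_i=\sum_{l\in\mathcal L_i}t_{i,l}$. A profile $\mathbf m^*$ is a stationary profile if for every $i$ and every admissible $\mathbf m_i$: $U_i(\mathbf x_i^* )-t_i(\mathbf m_i^*,\mathbf m_{-i}^* )\ge U_i(\mathbf x_i)-t_i(\mathbf m_i,\mathbf m_{-i}^* )$. It is an efficient stationary profile if moreover $w^*_{i,l}=w^*_{j,l}=w^*_{-i,l}=:w^*_l$ for all $l\in\mathcal L$, $i,j\in\mathcal A_l$. *)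

(* Defs.v *)
From Stdlib Require Import Reals Lra List Arith.
Open Scope R_scope.

(* Conventions: agents are 0..m-1, goods are 0..nL-1.
   inL i l : good l belongs to L_i.
   A message profile is a pair (x, p) of functions agent -> good -> R;
   only entries x i l, p i l with l in L_i are meaningful. *)

Definition sumR (s : list nat) (f : nat -> R) : R :=
  fold_right (fun j acc => f j + acc) 0 s.

Definition goods_of (nL : nat) (inL : nat -> nat -> bool) (i : nat) : list nat :=
  filter (fun l => inL i l) (List.seq 0 nL).

Definition agents_of (m : nat) (inL : nat -> nat -> bool) (l : nat) : list nat :=
  filter (fun i => inL i l) (List.seq 0 m).

Definition others (m : nat) (inL : nat -> nat -> bool) (l i : nat) : list nat :=
  filter (fun j => negb (Nat.eqb j i)) (agents_of m inL l).

Definition upd (z : nat -> nat -> R) (i : nat) (v : nat -> R) : nat -> nat -> R :=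
  fun j l => if Nat.eqb j i then v l else z j l.

Definition admissible (nL : nat) (inL : nat -> nat -> bool) (c : nat -> R) (M : R)
  (i : nat) (xi pi : nat -> R) : Prop :=
  forall l, In l (goods_of nL inL i) ->
    0 <= xi l <= c l /\ 0 <= pi l <= M.

Definition tax_il (m : nat) (inL : nat -> nat -> bool) (c : nat -> R)
  (w : nat -> nat -> R) (kappa gamma : R)
  (phi : nat -> nat -> (nat -> nat -> R) -> (nat -> nat -> R) -> R)
  (x p : nat -> nat -> R) (i l : nat) : R :=
  let N := INR (length (agents_of m inL l)) in
  let pbar := / N * sumR (agents_of m inL l) (fun j => p j l) in
  let pmi := / (N - 1) * sumR (others m inL l i) (fun j => p j l) in
  let wmi := / (N - 1) * sumR (others m inL l i) (fun j => w j l) in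
  let E := sumR (others m inL l i) (fun j => x j l) - c l in
  wmi * x i l + / kappa * (Rabs (p i l - pbar)) ^ 2
  - wmi * (p i l - pmi) * (x i l + E) / gamma + phi i l x p.

Definition tax (m nL : nat) (inL : nat -> nat -> bool) (c : nat -> R)
  (w : nat -> nat -> R) (kappa gamma : R)
  (phi : nat -> nat -> (nat -> nat -> R) -> (nat -> nat -> R) -> R)
  (x p : nat -> nat -> R) (i : nat) : R :=
  sumR (goods_of nL inL i) (fun l => tax_il m inL c w kappa gamma phi x p i l).

Definition differentiable_on_coords (S : list nat) (U : (nat -> R) -> R) : Prop :=
  forall xv : nat -> R,
  exists g : nat -> R,
  forall eps : R, 0 < eps -> exists delta : R, 0 < delta /\
    forall h : nat -> R, (forall l, ~ In l S -> h l = 0) ->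
      sumR S (fun l => Rabs (h l)) < delta ->
      Rabs (U (fun l => xv l + h l) - U xv - sumR S (fun l => g l * h l))
        <= eps * sumR S (fun l => Rabs (h l)).

Definition concave_fun (U : (nat -> R) -> R) : Prop :=
  forall (xv yv : nat -> R) (t : R), 0 <= t <= 1 ->
    t * U xv + (1 - t) * U yv <= U (fun l => t * xv l + (1 - t) * yv l).

(* U depends only on the coordinates in S, i.e. U : R^{|S|} -> R. *)
Definition depends_only_on (S : list nat) (U : (nat -> R) -> R) : Prop :=
  forall xv yv : nat -> R, (forall l, In l S -> xv l = yv l) -> U xv = U yv.

Definition stationary (m nL : nat) (inL : nat -> nat -> bool) (c : nat -> R) (M : R)
  (U : nat -> (nat -> R) -> R) (w : nat -> nat -> R) (kappa gamma : R)
  (phi : nat -> nat -> (nat -> nat -> R) -> (nat -> nat -> R) -> R)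
  (xs ps : nat -> nat -> R) : Prop :=
  (forall i, (i < m)%nat -> admissible nL inL c M i (xs i) (ps i)) /\
  forall i, (i < m)%nat -> forall xi pi : nat -> R,
    admissible nL inL c M i xi pi ->
    U i (xs i) - tax m nL inL c w kappa gamma phi xs ps i
    >= U i xi - tax m nL inL c w kappa gamma phi (upd xs i xi) (upd ps i pi) i.

Definition efficient_w (m nL : nat) (inL : nat -> nat -> bool) (w : nat -> nat -> R) : Prop :=
  forall l, (l < nL)%nat -> forall i j,
    In i (agents_of m inL l) -> In j (agents_of m inL l) -> w i l = w j l.

(* Main.v *)
Require Import Defs.
From Stdlib Require Import Reals List Lra Lia Arith.
Open Scope R_scope.

Lemma sumR_ext (s : list nat) f g : (forall j, In j s -> f j = g j) -> sumR s f = sumR s g.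
Proof. induction s; simpl; intros H; auto. rewrite H by auto. rewrite IHs; auto. Qed.

Lemma sumR_nonneg (s : list nat) f : (forall j, In j s -> 0 <= f j) -> 0 <= sumR s f.
Proof. induction s; simpl; intros H; [lra|]. pose proof (H a (or_introl eq_refl)).
  assert (0 <= sumR s f) by auto. lra. Qed.

Lemma sumR_nonpos (s : list nat) f : (forall j, In j s -> f j <= 0) -> sumR s f <= 0.
Proof. induction s; simpl; intros H; [lra|]. pose proof (H a (or_introl eq_refl)).
  assert (sumR s f <= 0) by auto. lra. Qed.

Lemma sumR_filter_notin (s : list nat) f i : ~ In i s ->
  sumR s f = sumR (filter (fun j => negb (Nat.eqb j i)) s) f.
Proof.
  induction s as [|b s IHs]; simpl; intros H; auto.
  destruct (Nat.eqb b i) eqn:E2.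
  - apply Nat.eqb_eq in E2; subst. exfalso; apply H; left; auto.
  - simpl. rewrite IHs; auto.
Qed.

Lemma sumR_split (s : list nat) f i : NoDup s -> In i s ->
  sumR s f = f i + sumR (filter (fun j => negb (Nat.eqb j i)) s) f.
Proof.
  induction s as [|a s IH]; simpl; intros Hn Hi; [contradiction|].
  inversion Hn; subst.
  destruct (Nat.eqb a i) eqn:E; simpl.
  - apply Nat.eqb_eq in E; subst.
    f_equal. apply sumR_filter_notin; auto.
  - destruct Hi as [Hi|Hi]. { subst. rewrite Nat.eqb_refl in E; discriminate. }
    rewrite (IH H2 Hi). lra.
Qed.

Lemma len_filter_notin (s : list nat) i : ~ In i s ->
  length (filter (fun j => negb (Nat.eqb j i)) s) = length s.
Proof.
  induction s as [|b s IHs]; simpl; intros H; auto.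
  destruct (Nat.eqb b i) eqn:E2.
  - apply Nat.eqb_eq in E2; subst. exfalso; apply H; left; auto.
  - simpl. rewrite IHs; auto.
Qed.

Lemma len_split (s : list nat) i : NoDup s -> In i s ->
  S (length (filter (fun j => negb (Nat.eqb j i)) s)) = length s.
Proof.
  induction s as [|a s IH]; simpl; intros Hn Hi; [contradiction|].
  inversion Hn; subst.
  destruct (Nat.eqb a i) eqn:E; simpl.
  - apply Nat.eqb_eq in E; subst. f_equal. apply len_filter_notin; auto.
  - destruct Hi as [Hi|Hi]. { subst. rewrite Nat.eqb_refl in E; discriminate. }
    rewrite (IH H2 Hi). auto.
Qed.

Lemma sumR_le_M (s : list nat) f M : (forall j, In j s -> f j <= M) -> sumR s f <= INR (length s) * M.
Proof.
  induction s as [|a s IH]; intros H; [simpl; lra|].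
  change (length (a :: s)) with (S (length s)). rewrite S_INR. simpl sumR. pose proof (H a (or_introl eq_refl)).
  assert (sumR s f <= INR (length s) * M) by (apply IH; intros; apply H; right; auto). lra.
Qed.

Lemma in_agents m inL l j : In j (agents_of m inL l) <-> (j < m)%nat /\ inL j l = true.
Proof. unfold agents_of. rewrite filter_In, in_seq. split; intros [? ?]; split; auto; lia. Qed.

Lemma in_goods nL inL i l : In l (goods_of nL inL i) <-> (l < nL)%nat /\ inL i l = true.
Proof. unfold goods_of. rewrite filter_In, in_seq. split; intros [? ?]; split; auto; lia. Qed.

Lemma in_others m inL l i j : In j (others m inL l i) -> In j (agents_of m inL l) /\ j <> i.
Proof. unfold others. rewrite filter_In. intros [H1 H2]; split; auto.
  intro; subst. rewrite Nat.eqb_refl in H2; discriminate. Qed.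

Theorem theorem1
  (m nL : nat) (inL : nat -> nat -> bool) (c : nat -> R) (M : R)
  (U : nat -> (nat -> R) -> R) (w : nat -> nat -> R) (kappa gamma : R)
  (phi : nat -> nat -> (nat -> nat -> R) -> (nat -> nat -> R) -> R)
  (xs ps : nat -> nat -> R)
  (Hc : forall l, (l < nL)%nat -> 0 <= c l)
  (HM : 0 < M)
  (Hkappa : 0 < kappa) (Hgamma : 0 < gamma)
  (HA : forall l, (l < nL)%nat -> (3 <= length (agents_of m inL l))%nat)
  (HUdiff : forall i, (i < m)%nat -> differentiable_on_coords (goods_of nL inL i) (U i))
  (HUconc : forall i, (i < m)%nat -> concave_fun (U i))
  (HUdom : forall i, (i < m)%nat -> depends_only_on (goods_of nL inL i) (U i))
  (HU0 : forall i, (i < m)%nat -> U i (fun _ => 0) = 0)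
  (Hw : forall j l, 0 <= w j l)
  (* phi_{i,l} depends only on the messages of agents other than i *)
  (Hphi_others : forall i l (x p x' p' : nat -> nat -> R),
      (forall j, j <> i -> forall l', x j l' = x' j l' /\ p j l' = p' j l') ->
      phi i l x p = phi i l x' p')
  (* value of phi_{i,l} at the considered profile m^* = (xs, ps); by efficiency
     w_{-i,l} = w*_l *)
  (Hphi_val : forall i l, (i < m)%nat -> In l (goods_of nL inL i) ->
      phi i l xs ps =
        - (/ (INR (length (agents_of m inL l)) - 1)
             * sumR (others m inL l i) (fun j => w j l))
        * (/ (INR (length (agents_of m inL l)) - 1)
             * sumR (others m inL l i) (fun j => xs j l)))
  (Heff : efficient_w m nL inL w)
  (Hstat : stationary m nL inL c M U w kappa gamma phi xs ps) :
  forall i, (i < m)%nat ->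
    U i (xs i) - tax m nL inL c w kappa gamma phi xs ps i >= U i (fun _ => 0) - 0.
Proof.
  intros i Hi.
  destruct Hstat as [Hadm Hst].
  set (pmi := fun l => / (INR (length (agents_of m inL l)) - 1)
                        * sumR (others m inL l i) (fun j => ps j l)).
  assert (HN : forall l, (l < nL)%nat -> 2 < INR (length (agents_of m inL l))).
  { intros l Hl. pose proof (HA l Hl). apply le_INR in H.
    replace (INR 3) with 3 in H by (simpl; lra). lra. }
  assert (Hxnn : forall l j, (l < nL)%nat -> In j (agents_of m inL l) -> 0 <= xs j l /\ 0 <= ps j l <= M).
  { intros l j Hl Hj. apply in_agents in Hj as [Hjm Hjl].
    destruct (Hadm j Hjm l) as [[? ?] ?]. apply in_goods; auto. split; [lra|auto]. }
  assert (Hadm0 : admissible nL inL c M i (fun _ => 0) pmi).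
  { intros l Hl. pose proof Hl as Hl'. apply in_goods in Hl' as [Hl1 HinL].
    split. split; [lra| apply Hc; auto].
    pose proof (HN l Hl1) as HNl.
    set (N := INR (length (agents_of m inL l))) in *.
    assert (Hlen : INR (length (others m inL l i)) = N - 1).
    { assert (Hio : In i (agents_of m inL l)) by (apply in_agents; split; auto).
      assert (Hnd : NoDup (agents_of m inL l)) by (apply NoDup_filter, seq_NoDup).
      pose proof (len_split _ i Hnd Hio) as HL. unfold N. rewrite <- HL, S_INR.
      unfold others. lra. }
    unfold pmi. fold N.
    assert (0 <= sumR (others m inL l i) (fun j => ps j l)).
    { apply sumR_nonneg. intros j Hj. apply in_others in Hj as [Hj _]. apply (Hxnn l j Hl1 Hj). }
    assert (sumR (others m inL l i) (fun j => ps j l) <= (N - 1) * M).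
    { rewrite <- Hlen. apply sumR_le_M. intros j Hj. apply in_others in Hj as [Hj _].
      apply (Hxnn l j Hl1 Hj). }
    split. apply Rmult_le_pos; auto. apply Rlt_le, Rinv_0_lt_compat; lra.
    apply (Rmult_le_reg_l (N-1)). lra. rewrite <- Rmult_assoc, Rinv_r by lra. lra. }
  pose proof (Hst i Hi _ _ Hadm0) as H.
  enough (tax m nL inL c w kappa gamma phi (upd xs i (fun _ => 0)) (upd ps i pmi) i <= 0) by lra.
  unfold tax. apply sumR_nonpos. intros l Hl.
  pose proof Hl as Hl'. apply in_goods in Hl' as [Hl1 HinL].
  pose proof (HN l Hl1) as HNl.
  unfold tax_il.
  set (N := INR (length (agents_of m inL l))) in *.
  assert (Hio : In i (agents_of m inL l)) by (apply in_agents; auto).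
  assert (Hnd : NoDup (agents_of m inL l)) by (apply NoDup_filter, seq_NoDup).
  assert (Hoth : forall f g : nat -> nat -> R, (forall j, j <> i -> f j l = g j l) ->
     sumR (others m inL l i) (fun j => f j l) = sumR (others m inL l i) (fun j => g j l)).
  { intros f g Hfg. apply sumR_ext. intros j Hj. apply in_others in Hj as [_ Hj]. auto. }
  rewrite (Hoth (upd ps i pmi) ps) by (intros j Hj; unfold upd; rewrite (proj2 (Nat.eqb_neq j i) Hj); auto).
  rewrite (Hoth (upd xs i (fun _ => 0)) xs) by (intros j Hj; unfold upd; rewrite (proj2 (Nat.eqb_neq j i) Hj); auto).
  rewrite (sumR_split _ _ i Hnd Hio).
  fold (others m inL l i).
  rewrite (Hoth (upd ps i pmi) ps) by (intros j Hj; unfold upd; rewrite (proj2 (Nat.eqb_neq j i) Hj); auto).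
  rewrite (Hphi_others i l (upd xs i (fun _ => 0)) (upd ps i pmi) xs ps).
  2:{ intros j Hj l'. unfold upd. rewrite (proj2 (Nat.eqb_neq j i) Hj). auto. }
  rewrite (Hphi_val i l Hi Hl). fold N.
  unfold upd. rewrite Nat.eqb_refl.
  assert (Hpm : / (N - 1) * sumR (others m inL l i) (fun j => ps j l) = pmi l) by reflexivity.
  rewrite Hpm.
  assert (Hs : sumR (others m inL l i) (fun j => ps j l) = (N - 1) * pmi l).
  { rewrite <- Hpm. field. lra. }
  rewrite Hs.
  replace (/ N * (pmi l + (N - 1) * pmi l)) with (pmi l) by (field; lra).
  replace (pmi l - pmi l) with 0 by ring.
  rewrite Rabs_R0.
  assert (0 <= / (N - 1) * sumR (others m inL l i) (fun j => w j l)).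
  { apply Rmult_le_pos. apply Rlt_le, Rinv_0_lt_compat; lra. apply sumR_nonneg; auto. }
  assert (0 <= / (N - 1) * sumR (others m inL l i) (fun j => xs j l)).
  { apply Rmult_le_pos. apply Rlt_le, Rinv_0_lt_compat; lra. apply sumR_nonneg.
    intros j Hj. apply in_others in Hj as [Hj _]. apply (Hxnn l j Hl1 Hj). }
  set (a := / (N - 1) * sumR (others m inL l i) (fun j => w j l)) in *.
  set (b := / (N - 1) * sumR (others m inL l i) (fun j => xs j l)) in *.
  assert (0 <= a * b) by (apply Rmult_le_pos; auto).
  replace (a * 0 + / kappa * 0 ^ 2 - a * 0 * (0 + (sumR (others m inL l i) (fun j => xs j l) - c l)) / gamma + - a * b) with (- (a*b)) by (unfold Rdiv; ring).
  lra.
Qed.
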